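(* Let $m\ge0$, let $f:\mathbb{R}^n\to\mathbb{R}$ be $m$-weakly convex with $f^\star:=\inf_x f(x)>-\infty$, and let $\beta\in(0,1)$, $\rho>0$, $\alpha=m+\rho$, $x_1\in\mathbb{R}^n$. Suppose the sequence $(x_k)_{k\ge1}$ is generated as follows: for each $k\ge1$ there is a convex function $\tilde f_k:\mathbb{R}^n\to\mathbb{R}$ with $\tilde f_k(x)\le f(x)+\frac m2\|x-x_k\|^2$ for all $x$, such that $x_{k+1}=\arg\min_x\{\tilde f_k(x)+\frac\rho2\|x-x_k\|^2\}$ and $$f(x_k)-\Big(f(x_{k+1})+\frac m2\|x_{k+1}-x_k\|^2\Big)\ge\beta\big(f(x_k)-\tilde f_k(x_{k+1})\big).$$ Let $\eta>0$, $\epsilon>0$. If $T$ is an integer with $$T\ge \frac{2\alpha^2(f(x_1)-f^\star)}{m+\beta\rho}\cdot\frac1{\eta^2}+\frac{(1-\beta)(f(x_1)-f^\star)}{\beta}\cdot\frac1\epsilon+1,$$ then at least one of $x_2,\dots,x_{T+1}$ is an $(\eta,\epsilon)$-inexact stationary point of $f$.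
   Context: A function $f$ is $m$-weakly convex ($m\ge 0$) if $x\mapsto f(x)+\frac{m}{2}\|x\|^2$ is convex. For $\epsilon\ge 0$, the $\epsilon$-inexact subdifferential at $x$ is $\partial_\epsilon f(x)=\{v\in\mathbb{R}^n: f(y)\ge f(x)+\langle v,y-x\rangle-\frac{m}{2}\|y-x\|^2-\epsilon\ \ \forall y\in\mathbb{R}^n\}$. A point $x$ is an $(\eta,\epsilon)$-inexact stationary point if $\mathrm{dist}(0,\partial_\epsilon f(x))\le\eta$. *)

(* Defs.v *)
From HB Require Import structures.
From mathcomp Require Import all_boot all_order all_algebra.
From mathcomp Require Import all_classical all_reals ereal.
Set Implicit Arguments. Unset Strict Implicit. Unset Printing Implicit Defensive.
Import Order.TTheory GRing.Theory Num.Theory.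
Local Open Scope ring_scope.
Local Open Scope classical_set_scope.

Section Defs.
Variables (R : realType) (n : nat).
Notation vec := 'rV[R]_n.

Definition dotv (x y : vec) : R := \sum_(i < n) x ord0 i * y ord0 i.
Definition enorm (x : vec) : R := Num.sqrt (dotv x x).

Definition convexf (g : vec -> R) : Prop :=
  forall (x y : vec) (t : R), 0 <= t -> t <= 1 ->
    g ((1 - t) *: x + t *: y) <= (1 - t) * g x + t * g y.

Definition weakly_convex (m : R) (f : vec -> R) : Prop :=
  convexf (fun x => f x + m / 2 * enorm x ^+ 2).

Definition inexact_subdiff (m : R) (f : vec -> R) (eps : R) (x : vec) : set vec :=
  [set v | forall y : vec,
     f y >= f x + dotv v (y - x) - m / 2 * enorm (y - x) ^+ 2 - eps].

(* dist(0, S) as an extended real (+oo for empty S) *)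
Definition dist0 (S : set vec) : \bar R :=
  ereal_inf [set (enorm v)%:E | v in S].

Definition inexact_stationary (m : R) (f : vec -> R) (eta eps : R) (x : vec) : Prop :=
  (dist0 (inexact_subdiff m f eps x) <= eta%:E)%E.

End Defs.

(* Main.v *)
Require Import Defs.
From HB Require Import structures.
From mathcomp Require Import all_boot all_order all_algebra.
From mathcomp Require Import all_classical all_reals ereal.
From mathcomp Require Import ring lra.
Import Order.TTheory GRing.Theory Num.Theory.
Local Open Scope ring_scope.

Section Aux.
Variables (R : realType) (n : nat).
Notation vec := 'rV[R]_n.
Implicit Types (u v w : vec).

Lemma dotvC u v : dotv u v = dotv v u.
Proof. by apply: eq_bigr => i _; rewrite mulrC. Qed.

Lemma dotvDl u v w : dotv (u + v) w = dotv u w + dotv v w.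
Proof. by rewrite /dotv -big_split; apply: eq_bigr => i _; rewrite !mxE mulrDl. Qed.

Lemma dotvZl (a : R) u w : dotv (a *: u) w = a * dotv u w.
Proof. by rewrite /dotv mulr_sumr; apply: eq_bigr => i _; rewrite !mxE mulrA. Qed.

Lemma dotvNl u w : dotv (- u) w = - dotv u w.
Proof. by rewrite -scaleN1r dotvZl mulN1r. Qed.

Lemma dotvBl u v w : dotv (u - v) w = dotv u w - dotv v w.
Proof. by rewrite dotvDl dotvNl. Qed.

Lemma dotv_ge0 u : 0 <= dotv u u.
Proof. by apply: sumr_ge0 => i _; rewrite -expr2 sqr_ge0. Qed.

Lemma enorm2 u : enorm u ^+ 2 = dotv u u.
Proof. by rewrite /enorm sqr_sqrtr // dotv_ge0. Qed.

Lemma enorm_ge0 u : 0 <= enorm u.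
Proof. exact: sqrtr_ge0. Qed.

Lemma enormB2 u v : enorm (u - v) ^+ 2 = enorm u ^+ 2 - 2 * dotv u v + enorm v ^+ 2.
Proof. rewrite !enorm2 !dotvBl (dotvC u (u - v)) (dotvC v (u - v)) !dotvBl (dotvC v u); ring. Qed.

Lemma enormD2 u v : enorm (u + v) ^+ 2 = enorm u ^+ 2 + 2 * dotv u v + enorm v ^+ 2.
Proof. rewrite !enorm2 !dotvDl (dotvC u (u + v)) (dotvC v (u + v)) !dotvDl (dotvC v u); ring. Qed.

Lemma enormZ2 (a : R) u : enorm (a *: u) ^+ 2 = a ^+ 2 * enorm u ^+ 2.
Proof. rewrite !enorm2 dotvZl (dotvC u (a *: u)) dotvZl; ring. Qed.

Lemma enorm0 : enorm (0 : vec) = 0.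
Proof. by rewrite /enorm /dotv big1 ?sqrtr0 // => i _; rewrite mxE mul0r. Qed.

Lemma lim0 (D s : R) : (forall t, 0 < t -> t <= 1 -> D <= t * s) -> D <= 0.
Proof.
move=> H; rewrite leNgt; apply/negP => D0.
have [s0|s0] := leP s 0.
  have := H 1 ltr01 (lexx _); lra.
have Hp : 0 < D + s by lra.
have t1 : D / (D + s) <= 1 by rewrite ler_pdivrMr // mul1r; lra.
have := H _ (divr_gt0 D0 Hp) t1.
rewrite mulrAC ler_pdivlMr //; nra.
Qed.

Lemma vecid1 (xs xk y : vec) (t : R) :
  (1 - t) *: xs + t *: y - xk = (xs - xk) + t *: (y - xs).
Proof. apply/rowP => i; rewrite !mxE; ring. Qed.

Lemma vecid2 (y xs xk : vec) : y - xk = (y - xs) - (xk - xs).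
Proof. apply/rowP => i; rewrite !mxE; ring. Qed.

Lemma subgrad (g : vec -> R) (rho : R) (xk xs : vec) :
  convexf g -> 0 < rho ->
  (forall y, g xs + rho / 2 * enorm (xs - xk) ^+ 2 <= g y + rho / 2 * enorm (y - xk) ^+ 2) ->
  forall y, g xs + rho * dotv (xk - xs) (y - xs) <= g y.
Proof.
move=> cg rp opt y.
suff : g xs - g y - rho * dotv (xs - xk) (y - xs) <= 0.
  by rewrite -(opprB xk xs) dotvNl; lra.
apply: (@lim0 _ (rho / 2 * enorm (y - xs) ^+ 2)) => t t0 t1.
have c := cg xs y t (ltW t0) t1.
have o := opt ((1 - t) *: xs + t *: y).
rewrite vecid1 (enormD2 (xs - xk)) enormZ2 (dotvC (xs - xk)) dotvZl in o.
rewrite dotvC; nra.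
Qed.

Lemma stepL (m rho beta eta eps : R) (f g : vec -> R) (xk xs : vec) :
  0 <= m -> 0 < rho -> 0 < beta -> beta < 1 -> 0 < eta -> 0 < eps ->
  convexf g -> (forall y, g y <= f y + m / 2 * enorm (y - xk) ^+ 2) ->
  (forall y, g xs + rho / 2 * enorm (xs - xk) ^+ 2 <= g y + rho / 2 * enorm (y - xk) ^+ 2) ->
  f xk - (f xs + m / 2 * enorm (xs - xk) ^+ 2) >= beta * (f xk - g xs) ->
  ~ inexact_stationary m f eta eps xs ->
  0 <= f xk - f xs /\ 1 <= (f xk - f xs) * (2 * (m + rho) ^+ 2 / ((m + beta * rho) * eta ^+ 2))
       + (f xk - f xs) * ((1 - beta) / (beta * eps)).
Proof.
move=> m0 r0 b0 b1 e0 ep0 cg hub opt desc nst.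
have sg := @subgrad g rho xk xs cg r0 opt.
have ed : enorm (xs - xk) ^+ 2 = enorm (xk - xs) ^+ 2.
  by rewrite -(opprB xk xs) -scaleN1r enormZ2 expr2 mulN1r opprK mul1r.
rewrite ed in desc.
have G0 : rho * enorm (xk - xs) ^+ 2 <= f xk - g xs.
  have := sg xk; have := hub xk; rewrite subrr enorm0 enorm2; nra.
have Q0 := enorm_ge0 (xk - xs).
have Q2 : 0 <= enorm (xk - xs) ^+ 2 by rewrite enorm2 dotv_ge0.
have G1 : 0 <= f xk - g xs by have := mulr_ge0 (ltW r0) Q2; lra.
have bG : 0 <= beta * (f xk - g xs) by rewrite mulr_ge0 // ltW.
have mQ : 0 <= m / 2 * enorm (xk - xs) ^+ 2 by rewrite mulr_ge0 // divr_ge0.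
have D0 : 0 <= f xk - f xs by lra.
split; first by [].
have c1p : 0 <= (f xk - f xs) * (2 * (m + rho) ^+ 2 / ((m + beta * rho) * eta ^+ 2)).
  by rewrite mulr_ge0 // divr_ge0 // ?mulr_ge0 // ?addr_ge0 // ?exprn_ge0 // ?mulr_ge0 // ltW.
have c2p : 0 <= (f xk - f xs) * ((1 - beta) / (beta * eps)).
  by rewrite mulr_ge0 // divr_ge0 // ?subr_ge0 ?mulr_ge0 // ltW.
have mb : 0 < m + beta * rho by rewrite ltr_wpDl // mulr_gt0.
have [h1|h1] := leP ((m + rho) * enorm (xk - xs)) eta; last first.
  enough (HH : 1 <= (f xk - f xs) * (2 * (m + rho) ^+ 2 / ((m + beta * rho) * eta ^+ 2))) by lra.
  rewrite mulrA ler_pdivlMr ?mul1r; last by rewrite mulr_gt0 // exprn_gt0.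
  have h5 : eta ^+ 2 <= (m + rho) ^+ 2 * enorm (xk - xs) ^+ 2.
    rewrite -exprMn lerXn2r ?nnegrE ?(ltW e0) //; last exact: ltW.
    by rewrite mulr_ge0 // addr_ge0 // ltW.
  have h6 : beta * (rho * enorm (xk - xs) ^+ 2) <= beta * (f xk - g xs) by rewrite ler_pM2l.
  have h7 : m / 2 * enorm (xk - xs) ^+ 2 + beta * (rho * enorm (xk - xs) ^+ 2) <= f xk - f xs by lra.
  have h8 : 0 <= (m + rho) ^+ 2 by rewrite exprn_ge0 // addr_ge0 // ltW.
  have h9 : 0 <= beta * rho by rewrite mulr_ge0 // ltW.
  nra.
have [h2|h2] := leP ((1 - beta) * (f xk - g xs)) eps; last first.
  enough (HH : 1 <= (f xk - f xs) * ((1 - beta) / (beta * eps))) by lra.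
  rewrite mulrA ler_pdivlMr ?mul1r; last by rewrite mulr_gt0.
  have h7 : beta * (f xk - g xs) <= f xk - f xs by lra.
  nra.
exfalso; apply: nst.
rewrite /inexact_stationary /dist0.
apply: le_trans (ereal_inf_lbound _) _.
  exists ((m + rho) *: (xk - xs)); last by [].
  move=> y; have h3 := sg y; have h4 := hub y.
  rewrite (vecid2 y xs xk) enormB2 (dotvC (y - xs)) in h4.
  rewrite dotvZl; nra.
rewrite lee_fin.
have := enormZ2 (m + rho) (xk - xs).
have := enorm_ge0 ((m + rho) *: (xk - xs)).
set e := enorm _; set q := enorm _ => e0' E.
have a0 : 0 <= (m + rho) * q by rewrite mulr_ge0 // addr_ge0 // ltW.
have E2 : e ^+ 2 = ((m + rho) * q) ^+ 2 by rewrite E exprMn.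
have : ((m + rho) * q) ^+ 2 <= eta ^+ 2 by rewrite lerXn2r // ?nnegrE ltW.
rewrite -E2 => H; have et := ltW e0; nra.
Qed.
End Aux.

Theorem mainTheorem6 (R : realType) (n : nat) (m : R) (f : 'rV[R]_n -> R)
  (fstar beta rho : R) (x : nat -> 'rV[R]_n) (ftil : nat -> 'rV[R]_n -> R)
  (eta eps : R) (T : nat) :
  0 <= m ->
  weakly_convex m f ->
  (forall y, fstar <= f y) ->
  (forall e : R, 0 < e -> exists y, f y < fstar + e) ->
  0 < beta -> beta < 1 -> 0 < rho ->
  (forall k : nat, (1 <= k)%N ->
     [/\ convexf (ftil k),
         (forall y, ftil k y <= f y + m / 2 * enorm (y - x k) ^+ 2),
         (forall y, ftil k (x k.+1) + rho / 2 * enorm (x k.+1 - x k) ^+ 2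
                    <= ftil k y + rho / 2 * enorm (y - x k) ^+ 2) &
         f (x k) - (f (x k.+1) + m / 2 * enorm (x k.+1 - x k) ^+ 2)
           >= beta * (f (x k) - ftil k (x k.+1))]) ->
  0 < eta -> 0 < eps ->
  T%:R >= 2 * (m + rho) ^+ 2 * (f (x 1%N) - fstar) / (m + beta * rho) / eta ^+ 2
          + (1 - beta) * (f (x 1%N) - fstar) / beta / eps + 1 ->
  exists k : nat, [/\ (2 <= k)%N, (k <= T.+1)%N &
                      inexact_stationary m f eta eps (x k)].

Proof.
move=> m0 wc fs finf b0 b1 r0 hstep e0 ep0 hT.
apply: contrapT => Hno.
set c1 := 2 * (m + rho) ^+ 2 / ((m + beta * rho) * eta ^+ 2).
set c2 := (1 - beta) / (beta * eps).
have mb : 0 < m + beta * rho by have := mulr_gt0 b0 r0; lra.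
have c1p : 0 <= c1.
  apply: divr_ge0; first by rewrite mulr_ge0 // exprn_ge0 // addr_ge0 // ltW.
  by rewrite mulr_ge0 ?exprn_ge0 // ltW.
have c2p : 0 <= c2 by rewrite divr_ge0 // ?subr_ge0 ?mulr_ge0 // ltW.
have key : forall N, (N <= T)%N ->
    N%:R <= (f (x 1%N) - f (x N.+1)) * c1 + (f (x 1%N) - f (x N.+1)) * c2.
  elim=> [|N IH] hN; first by rewrite subrr !mul0r addr0.
  have IH' := IH (ltnW hN).
  have [cg hub opt desc] := hstep N.+1 isT.
  have nst : ~ inexact_stationary m f eta eps (x N.+2).
    by move=> st; apply: Hno; exists N.+2; split.
  have [_ S] := @stepL R n m rho beta eta eps f (ftil N.+1) (x N.+1) (x N.+2) m0 r0 b0 b1 e0 ep0 cg hub opt desc nst.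
  rewrite mulrS.
  move: IH' S; rewrite -/c1 -/c2 => IH' S.
  have e1 : (f (x 1%N) - f (x N.+2)) * c1 + (f (x 1%N) - f (x N.+2)) * c2
     = ((f (x 1%N) - f (x N.+1)) * c1 + (f (x 1%N) - f (x N.+1)) * c2)
       + ((f (x N.+1) - f (x N.+2)) * c1 + (f (x N.+1) - f (x N.+2)) * c2) by ring.
  rewrite e1; lra.
have K := key T (leqnn T).
have F1 : f (x 1%N) - f (x T.+1) <= f (x 1%N) - fstar by have := fs (x T.+1); lra.
have K2 : (f (x 1%N) - f (x T.+1)) * c1 <= (f (x 1%N) - fstar) * c1 by exact: (ler_wpM2r c1p F1).
have K3 : (f (x 1%N) - f (x T.+1)) * c2 <= (f (x 1%N) - fstar) * c2 by exact: (ler_wpM2r c2p F1).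
have eA : 2 * (m + rho) ^+ 2 * (f (x 1%N) - fstar) / (m + beta * rho) / eta ^+ 2
   = (f (x 1%N) - fstar) * c1.
  rewrite /c1; field; apply/andP; split; rewrite ?expf_neq0 // gt_eqF //.
have eB : (1 - beta) * (f (x 1%N) - fstar) / beta / eps = (f (x 1%N) - fstar) * c2.
  rewrite /c2; field; apply/andP; split; rewrite gt_eqF //.
rewrite eA eB in hT.
lra.
Qed.
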